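(* Let $R$ be a local ring with regular maximal ideal $M$ and residue field $F=R/M$, and let $R_1=E(M)=\{q\in Q(R): qM\subseteq M\}$. Suppose that $R\subseteq R_1$ is a quadratic extension and $R\neq R_1$. Let $R_2=E(\operatorname{Jac} R_1)$. Then: (1) If $R_1$ is a local ring with $\operatorname{Jac} R_1=M$, then $R_1=R_2$ and $R_1/M$ is a field extension of $F$ of degree $2$. (2) If $R_1$ is a local ring with maximal ideal $M_1\neq M$, then $R_1=R+M_1$ and $R_1/M_1\cong F$. (3) If $R_1$ is not a local ring, then $\operatorname{Jac} R_1=M$, $R_1=R_2$, and $R_1/M$ is isomorphic as an $F$-algebra either to $F\times F$, or to $F\times F\times F$, in which case $F=\mathbb{F}_2$. (4) $(\operatorname{Jac} R_1)^2\subseteq M$.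
   Context: All rings are commutative with identity; a local ring is a ring with a unique maximal ideal (not necessarily Noetherian). $Q(R)$ denotes the total ring of quotients of $R$ and $\operatorname{Jac} R$ the Jacobson radical. An ideal is regular if it contains a nonzerodivisor. For a regular fractional ideal $I$ (an $R$-submodule of $Q(R)$ containing a nonzerodivisor with $bI\subseteq R$ for some nonzerodivisor $b\in R$), $E(I)=\{q\in Q(R): qI\subseteq I\}$. An extension of rings $R\subseteq S$ is quadratic if $xy\in xR+yR+R$ for all $x,y\in S$ (equivalently, every $R$-submodule between $R$ and $S$ is a ring). *)

(* Defs.v *)
(* Rings are modelled as subsets of a fixed ambient
   commutative ring Q which is the total ring of quotients of R. *)
From HB Require Import structures.
From mathcomp Require Import all_boot all_order all_algebra.
Set Implicit Arguments. Unset Strict Implicit. Unset Printing Implicit Defensive.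
Import GRing.Theory.
Local Open Scope ring_scope.

Section Defs.
Variable Q : comUnitRingType.

Definition set_eq (A B : Q -> Prop) := forall x, A x <-> B x.

Definition subring (R : Q -> Prop) :=
  [/\ R 0, R 1, (forall x y, R x -> R y -> R (x - y))
    & (forall x y, R x -> R y -> R (x * y))].

Definition ideal (S I : Q -> Prop) :=
  [/\ (forall x, I x -> S x), I 0, (forall x y, I x -> I y -> I (x + y))
    & (forall r x, S r -> I x -> I (r * x))].

Definition proper_ideal (S I : Q -> Prop) := ideal S I /\ ~ I 1.

Definition maximal_ideal (S I : Q -> Prop) :=
  proper_ideal S I /\
  forall J, proper_ideal S J -> (forall x, I x -> J x) -> forall x, J x -> I x.

Definition local_with (S M : Q -> Prop) :=
  maximal_ideal S M /\ forall N, maximal_ideal S N -> set_eq N M.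

Definition local (S : Q -> Prop) := exists M, local_with S M.

Definition Jac (S : Q -> Prop) (x : Q) :=
  S x /\ forall N, maximal_ideal S N -> N x.

Definition nzd (R : Q -> Prop) (x : Q) :=
  R x /\ forall y, R y -> x * y = 0 -> y = 0.

Definition total_quotient_ring (R : Q -> Prop) :=
  [/\ subring R, (forall b, nzd R b -> b \is a GRing.unit)
    & forall q, exists a b, [/\ R a, nzd R b & q = a / b]].

Definition regular (R I : Q -> Prop) := exists x, I x /\ nzd R x.

Definition E (I : Q -> Prop) (q : Q) := forall x, I x -> I (q * x).

Definition quadratic (R S : Q -> Prop) :=
  (forall x, R x -> S x) /\
  forall x y, S x -> S y ->
    exists a b c, [/\ R a, R b, R c & x * y = x * a + y * b + c].

(* S/I (with M*S ⊆ I) is an n-dimensional vector space over F = R/M,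
   with basis the images of e 0, ..., e (n-1) *)
Definition residue_basis (R M S I : Q -> Prop) (n : nat) (e : 'I_n -> Q) :=
  [/\ (forall i, S (e i)),
      (forall y, S y -> exists a : 'I_n -> Q,
          (forall i, R (a i)) /\ I (y - \sum_(i < n) a i * e i))
    & (forall a : 'I_n -> Q, (forall i, R (a i)) ->
          I (\sum_(i < n) a i * e i) -> forall i, M (a i))].

Definition residue_dim (R M S I : Q -> Prop) (n : nat) :=
  exists e : 'I_n -> Q, residue_basis R M S I e.

(* S/I is isomorphic, as an F-algebra (F = R/M), to F^n = F x ... x F:
   the preimages e i of the standard unit vectors form an F-basis of S/I
   and are orthogonal idempotents summing to 1 modulo I. *)
Definition residue_split (R M S I : Q -> Prop) (n : nat) :=
  exists e : 'I_n -> Q,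
    [/\ residue_basis R M S I e,
        (forall i j, I (e i * e j - (if i == j then e i else 0)))
      & I (\sum_(i < n) e i - 1)].

(* the residue field R/M is F_2 (given 1 ∉ M) *)
Definition residue_F2 (R M : Q -> Prop) := forall r, R r -> M r \/ M (r - 1).

End Defs.

(* Main.v *)
Require Import Defs.
From HB Require Import structures.
From mathcomp Require Import all_boot all_order all_algebra.
From Stdlib Require Import Classical FunctionalExtensionality PropExtensionality.
From mathcomp Require Import ring.
From mathcomp Require classical_sets.
Set Implicit Arguments. Unset Strict Implicit. Unset Printing Implicit Defensive.
Import GRing.Theory.
Local Open Scope ring_scope.
Notation pideal := Defs.proper_ideal.

Lemma zorn_ideal (Q : comUnitRingType) (S I : Q -> Prop) :
  pideal S I -> exists N, maximal_ideal S N /\ (forall x, I x -> N x).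
Proof.
move=> [[IS I0 Iadd Imul] nI1].
pose P := fun X : Q -> Prop => (forall x, ~ X x) \/ (pideal S X /\ forall x, I x -> X x).
have := @classical_sets.Zorn_bigcup Q P.
case.
- move=> F FP Ftot; rewrite /classical_sets.bigcup /classical_sets.mkset /=.
  case: (classic (exists X, F X /\ pideal S X /\ forall x, I x -> X x)); last first.
    move=> nex; left => x [X FX Xx]; apply: nex; exists X; split=> //.
    by case: (FP X FX) => [/(_ x)//|].
  move=> [X0 [FX0 [[[X0S X00 _ _] _] IX0]]].
  have ne (X : Q -> Prop) x : F X -> X x -> pideal S X.
    by move=> FX Xx; case: (FP X FX) => [/(_ x)//|[]].
  right; split; last first. move=> x Ix. exists X0. exact: FX0. exact: IX0.
  split; last by move=> [X FX X1]; case: (ne X 1 FX X1).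
  split.
  + by move=> x [X FX Xx]; case: (ne X x FX Xx) => [[]] XS *; apply: XS.
  + by exists X0.
  + move=> x y [X FX Xx] [Y FY Yy].
    case: (Ftot X Y FX FY) => sub.
    * exists Y => //; case: (ne Y y FY Yy) => [[_ _ Yadd _] _]; apply: Yadd => //; exact: sub.
    * exists X => //; case: (ne X x FX Xx) => [[_ _ Xadd _] _]; apply: Xadd => //; exact: sub.
  + move=> r x Sr [X FX Xx]; exists X => //.
    by case: (ne X x FX Xx) => [[_ _ _ Xmul] _]; apply: Xmul.
- move=> A [PA Amax].
  case: PA => [Aempty|[Aprop IA]].
    exfalso; apply: (Amax I); last by right; split=> //; split.
    split; first by move=> x /Aempty.
    by move=> /(_ 0 I0) /Aempty.
  exists A; split=> //; split=> // J Jprop AJ.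
  apply: NNPP => nJA.
  apply: (Amax J); last by right; split=> // x /IA /AJ.
  by split.
Qed.

Section Gen.
Variable Q : comUnitRingType.
Implicit Types S I N : Q -> Prop.

Lemma sr_add S x y : subring S -> S x -> S y -> S (x + y).
Proof.
move=> [S0 S1 Hs Hm] Sx Sy; have -> : x + y = x - (0 - y) by rewrite sub0r opprK.
by apply: (Hs) => //; apply: (Hs).
Qed.
Lemma sr_opp S x : subring S -> S x -> S (- x).
Proof. by move=> [S0 S1 Hs Hm] Sx; rewrite -sub0r; apply: Hs. Qed.
Lemma sr_sub S x y : subring S -> S x -> S y -> S (x - y).
Proof. by case=> _ _ Hs _; apply: Hs. Qed.
Lemma sr_mul S x y : subring S -> S x -> S y -> S (x * y).
Proof. by case=> _ _ _ Hm; apply: Hm. Qed.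

Lemma id_opp S I x : subring S -> ideal S I -> I x -> I (- x).
Proof.
move=> hS [IS I0 Iadd Imul] Ix; rewrite -mulN1r; apply: Imul => //.
by apply: sr_opp => //; case: hS.
Qed.
Lemma id_mulr S I x r : ideal S I -> S r -> I x -> I (x * r).
Proof. by case=> _ _ _ Imul Sr Ix; rewrite mulrC; apply: Imul. Qed.

Lemma nonunit_max S x : subring S -> S x -> ~ (exists y, S y /\ y * x = 1) ->
  exists N, maximal_ideal S N /\ N x.
Proof.
move=> hS Sx nu.
have := @zorn_ideal Q S (fun z => exists r, S r /\ z = r * x).
case.
- split.
  + split.
    * by move=> z [r [Sr ->]]; apply: sr_mul.
    * by exists 0; split; [case: hS|rewrite mul0r].
    * move=> z w [r [Sr ->]] [s [Ss ->]]; exists (r + s); split; first exact: sr_add.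
      by rewrite mulrDl.
    * move=> s z Ss [r [Sr ->]]; exists (s * r); split; first exact: sr_mul.
      by rewrite mulrA.
  + by move=> [r [Sr E1]]; apply: nu; exists r.
- move=> N [NM NI]; exists N; split=> //; apply: NI; exists 1; split; first by case: hS.
  by rewrite mul1r.
Qed.

Lemma max_inv S N a : subring S -> maximal_ideal S N -> S a -> ~ N a ->
  exists n r, [/\ N n, S r & 1 = n + r * a].
Proof.
move=> hS [[[NS N0 Nadd Nmul] nN1] Nmax] Sa nNa.
apply: NNPP => nex.
pose J := fun z => exists n r, [/\ N n, S r & z = n + r * a].
have Jp : pideal S J.
  split; last by move=> [n [r [Nn Sr E1]]]; apply: nex; exists n, r.
  split.
  - move=> z [n [r [Nn Sr ->]]]; apply: sr_add => //; [exact: NS|exact: sr_mul].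
  - by exists 0, 0; split=> //; [case: hS|rewrite mul0r addr0].
  - move=> z w [n [r [Nn Sr ->]]] [m [s [Nm Ss ->]]]; exists (n + m), (r + s).
    split; [exact: Nadd|exact: sr_add|by rewrite mulrDl addrACA].
  - move=> s z Ss [n [r [Nn Sr ->]]]; exists (s * n), (s * r).
    split; [exact: Nmul|exact: sr_mul|by rewrite mulrDr mulrA].
have := Nmax J Jp.
have NJ : forall x, N x -> J x.
  by move=> x Nx; exists x, 0; split=> //; [case: hS|rewrite mul0r addr0].
move=> /(_ NJ a) HJ; apply: nNa; apply: HJ.
by exists 0, 1; split=> //; [case: hS|rewrite mul1r add0r].
Qed.

Lemma max_prime S N a b : subring S -> maximal_ideal S N -> S a -> S b ->
  N (a * b) -> ~ N a -> N b.
Proof.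
move=> hS hN Sa Sb Nab nNa.
have [n [r [Nn Sr E1]]] := max_inv hS hN Sa nNa.
case: hN => [[[NS N0 Nadd Nmul] _] _].
have -> : b = b * n + r * (a * b) by rewrite -[b in LHS]mulr1 E1; ring.
by apply: Nadd; apply: Nmul.
Qed.

End Gen.

Section Main.
Variables (Q : comUnitRingType) (R M : Q -> Prop).
Hypothesis HR : subring R.
Hypothesis HM : local_with R M.
Hypothesis Hq : quadratic R (E M).
Notation R1 := (E M).

Lemma MidR : ideal R M. Proof. by case: HM => [[[]]]. Qed.
Lemma nM1 : ~ M 1. Proof. by case: HM => [[[]]]. Qed.
Lemma MR x : M x -> R x. Proof. by case: MidR => H *; apply: H. Qed.
Lemma M0 : M 0. Proof. by case: MidR. Qed.
Lemma Madd x y : M x -> M y -> M (x + y). Proof. by case: MidR => _ _ H _; apply: H. Qed.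
Lemma RR1 x : R x -> R1 x. Proof. by move=> Rx m Mm; case: MidR => _ _ _ H; apply: H. Qed.
Lemma MR1 x : M x -> R1 x. Proof. by move=> /MR /RR1. Qed.
Lemma Mopp x : M x -> M (- x).
Proof. by apply: id_opp; [exact: HR|exact: MidR]. Qed.
Lemma hR1 : subring R1.
Proof.
split.
- by move=> m _; rewrite mul0r; exact: M0.
- by move=> m Mm; rewrite mul1r.
- move=> x y Hx Hy m Mm; rewrite mulrBl; apply: Madd; first exact: Hx.
  by apply: Mopp; apply: Hy.
- by move=> x y Hx Hy m Mm; rewrite -mulrA; apply: Hx; apply: Hy.
Qed.
Lemma MidR1 : ideal R1 M.
Proof.
split; [exact: MR1|exact: M0|exact: Madd|].
by move=> r x Hr Mx; apply: Hr.
Qed.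
Lemma Mml x y : M x -> R1 y -> M (x * y).
Proof. by move=> Mx Hy; rewrite mulrC; apply: Hy. Qed.
Lemma Mmr x y : R1 x -> M y -> M (x * y).
Proof. by move=> Hx My; apply: Hx. Qed.
Lemma Meq x y : x = y -> M y -> M x. Proof. by move->. Qed.
Lemma Radd x y : R x -> R y -> R (x + y). Proof. exact: sr_add. Qed.
Lemma Ropp x : R x -> R (- x). Proof. exact: sr_opp. Qed.
Lemma Rmul x y : R x -> R y -> R (x * y). Proof. exact: sr_mul. Qed.
Lemma R_1 : R 1. Proof. by case: HR. Qed.
Lemma R_0 : R 0. Proof. by case: HR. Qed.
Lemma R1add x y : R1 x -> R1 y -> R1 (x + y). Proof. exact: (sr_add hR1). Qed.
Lemma R1opp x : R1 x -> R1 (- x). Proof. exact: (sr_opp hR1). Qed.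
Lemma R1mul x y : R1 x -> R1 y -> R1 (x * y). Proof. exact: (sr_mul hR1). Qed.
Lemma R1_1 : R1 1. Proof. by case: hR1. Qed.

Ltac rsolve := first [assumption | apply: R_1 | apply: R_0 | apply: MR; assumption
  | apply: Radd; rsolve | apply: Ropp; rsolve | apply: Rmul; rsolve].
Ltac r1solve := first [assumption | apply: R1_1 | apply: RR1; rsolve
  | apply: MR1; assumption
  | apply: R1add; r1solve | apply: R1opp; r1solve | apply: R1mul; r1solve].
Ltac msolve := first [ assumption | apply: M0
  | apply: Madd; msolve
  | apply: Mopp; msolve
  | apply: Mml; [msolve | r1solve]
  | apply: Mmr; [r1solve | msolve] ].
Ltac mby e := apply: (@Meq _ e); [ring | msolve].


Lemma unitR r : R r -> ~ M r -> exists s, R s /\ s * r = 1.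
Proof.
move=> Rr nMr; apply: NNPP => nu.
have [N [NM Nr]] := nonunit_max HR Rr nu.
by apply: nMr; case: HM => _ /(_ N NM r) [H _]; exact: H.
Qed.

Lemma unitM r : R r -> ~ M r -> exists s, R s /\ M (s * r - 1).
Proof. move=> Rr nMr; have [s [Rs sr]] := unitR Rr nMr; exists s; split=> //.
by rewrite sr subrr; exact: M0. Qed.

Lemma Mcancel r u : R r -> R1 u -> M (r * u) -> ~ M u -> M r.
Proof.
move=> Rr Ru Mru nMu; apply: NNPP => nMr.
have [s [Rs sr]] := unitM Rr nMr; apply: nMu.
by mby (s * (r * u) - (s * r - 1) * u).
Qed.

Lemma Mcancel2 r u : R r -> R1 u -> M (u * r) -> ~ M r -> M u.
Proof.
move=> Rr Ru Mur nMr; have [s [Rs sr]] := unitM Rr nMr.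
by mby (s * (u * r) - u * (s * r - 1)).
Qed.

Lemma Mcancel' r u : R r -> R1 u -> M (u * r) -> ~ M u -> M r.
Proof. by move=> Rr Ru; rewrite mulrC; apply: Mcancel. Qed.


Lemma maxR1_M N x : maximal_ideal R1 N -> M x -> N x.
Proof.
move=> hN Mx; apply: NNPP => nNx.
have [n [r [Nn Rr E1]]] := max_inv hR1 hN (MR1 Mx) nNx.
have Mrx : M (r * x) by msolve.
have Rn : R n.
  have -> : n = 1 - r * x by rewrite E1; ring.
  rsolve.
have nMn : ~ M n.
  move=> Mn; apply: nM1; rewrite E1; msolve.
have [s [Rs sn]] := unitR Rn nMn.
case: hN => [[[NS N0 Nadd Nmul] nN1] _]; apply: nN1.
by rewrite -sn; apply: Nmul => //; apply: RR1.
Qed.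

Lemma RcapN N r : maximal_ideal R1 N -> R r -> N r -> M r.
Proof.
move=> [[[NS N0 Nadd Nmul] nN1] _] Rr Nr; apply: NNPP => nMr.
have [s [Rs sr]] := unitR Rr nMr.
by apply: nN1; rewrite -sr; apply: Nmul => //; apply: RR1.
Qed.

Lemma ex_max : exists N, maximal_ideal R1 N.
Proof.
have [N [HN _]] := @zorn_ideal Q R1 M (conj MidR1 nM1).
by exists N.
Qed.

Lemma nonunit_R1 g : R1 g -> ~ (exists w, R1 w /\ M (w * g - 1)) ->
  exists N, maximal_ideal R1 N /\ N g.
Proof.
move=> Rg nu; apply: nonunit_max => //; first exact: hR1.
move=> [w [Rw wg]]; apply: nu; exists w; split=> //; rewrite wg subrr; exact: M0.
Qed.

Lemma quad x y : R1 x -> R1 y ->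
  exists a b c, [/\ R a, R b, R c & M (x * y - (x * a + y * b + c))].
Proof.
move=> Hx Hy; have [a [b [c [Ra Rb Rc E1]]]] := Hq.2 x y Hx Hy.
by exists a, b, c; split=> //; rewrite E1 subrr; exact: M0.
Qed.

Lemma sq x : R1 x -> exists p q, [/\ R p, R q & M (x * x - (p * x + q))].
Proof.
move=> Hx; have [a [b [c [Ra Rb Rc E1]]]] := quad Hx Hx.
by exists (a + b), c; split; [rsolve|rsolve|mby (x * x - (x * a + x * b + c))].
Qed.

Lemma jacM x : M x -> Jac R1 x.
Proof. by move=> Mx; split; [exact: MR1| move=> N HN; exact: maxR1_M]. Qed.

Lemma Nideal N : maximal_ideal R1 N -> ideal R1 N.
Proof. by case=> [[]]. Qed.

Section NN.
Variable N : Q -> Prop.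
Hypothesis hN : maximal_ideal R1 N.
Lemma Nadd x y : N x -> N y -> N (x + y). Proof. by case: (Nideal hN) => _ _ H _; apply: H. Qed.
Lemma Nmr x y : R1 x -> N y -> N (x * y). Proof. by case: (Nideal hN) => _ _ _ H; apply: H. Qed.
Lemma Nml x y : N x -> R1 y -> N (x * y). Proof. by rewrite mulrC => *; apply: Nmr. Qed.
Lemma Nopp x : N x -> N (- x). Proof. by move=> Nx; rewrite -mulN1r; apply: Nmr => //; r1solve. Qed.
Lemma NM x : M x -> N x. Proof. exact: maxR1_M. Qed.
Lemma Neq x y : x = y -> N y -> N x. Proof. by move->. Qed.
End NN.

Ltac nsolve hN := first [ assumption | apply: (NM hN); msolve
  | apply: (Nadd hN); nsolve hN
  | apply: (Nopp hN); nsolve hN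
  | apply: (Nml hN); [nsolve hN | r1solve]
  | apply: (Nmr hN); [r1solve | nsolve hN] ].
Ltac nby hN e := apply: (@Neq _ _ e); [ring | nsolve hN].

Lemma jac_sq x : Jac R1 x -> M (x * x).
Proof.
move=> [Rx Jx]; have [p [q [Rp Rq Hx]]] := sq Rx.
have [N hN] := ex_max.
have Nx := Jx N hN.
have Mq : M q.
  apply: (RcapN hN) => //; nby hN (x * (x - p) - (x * x - (p * x + q))).
case: (classic (M p)) => Mp; first by mby ((x * x - (p * x + q)) + p * x + q).
have [w [Rw Hw]] : exists w, R1 w /\ M (w * (x - p) - 1).
  apply: NNPP => nu.
  have [N' [hN' N'xp]] := nonunit_R1 (R1add Rx (R1opp (RR1 Rp))) nu.
  apply: Mp; apply: (RcapN hN') => //.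
  have N'x := Jx N' hN'.
  nby hN' (x - (x - p)).
have Mx : M x by mby (w * (x * x - (p * x + q)) + w * q - (w * (x - p) - 1) * x).
msolve.
Qed.

Lemma jac_prod x y : Jac R1 x -> Jac R1 y -> M (x * y).
Proof.
move=> Jx Jy; have Mxx := jac_sq Jx; have Myy := jac_sq Jy.
case: Jx => Rx Jx; case: Jy => Ry Jy.
have [a [b [c [Ra Rb Rc Hxy]]]] := quad Rx Ry.
have [N hN] := ex_max.
have Nx := Jx N hN; have Ny := Jy N hN.
have Mc : M c.
  apply: (RcapN hN) => //; nby hN (x * y - x * a - y * b - (x * y - (x * a + y * b + c))).
have Ma : M (x * y * a).
  by mby (x * (y * y) - (y * y) * b - y * c - y * (x * y - (x * a + y * b + c))).
have Mb : M (x * y * b).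
  by mby (y * (x * x) - (x * x) * a - x * c - x * (x * y - (x * a + y * b + c))).
case: (classic (M a)) => Ma'; last by apply: (Mcancel2 Ra) => //; r1solve.
case: (classic (M b)) => Mb'; last by apply: (Mcancel2 Rb) => //; r1solve.
by mby ((x * y - (x * a + y * b + c)) + x * a + y * b + c).
Qed.

Lemma N_R1 N x : maximal_ideal R1 N -> N x -> R1 x.
Proof. by case=> [[[H _ _ _] _] _]; apply: H. Qed.

Lemma part2 M1 : local_with R1 M1 -> ~ set_eq M1 M ->
  set_eq R1 (fun y => exists r m, [/\ R r, M1 m & y = r + m]) /\
  residue_dim R M R1 M1 1.
Proof.
move=> [hM1 Hloc] neq.
have [z [M1z nMz]] : exists z, M1 z /\ ~ M z.
  apply: NNPP => nex; apply: neq => x; split; last exact: (NM hM1).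
  by move=> M1x; apply: NNPP => nMx; apply: nex; exists x.
have Rz := N_R1 hM1 M1z.
have unit1 g : R1 g -> ~ M1 g -> exists w, R1 w /\ M (w * g - 1).
  move=> Rg nM1g; apply: NNPP => nu.
  have [N [hN Ng]] := nonunit_R1 Rg nu.
  by apply: nM1g; case: (Hloc N hN g) => H _; apply: H.
have key y : R1 y -> exists b, R b /\ M1 (y - b).
  move=> Ry; have [a [b [c [Ra Rb Rc Hyz]]]] := quad Ry Rz.
  case: (classic (M a)) => Ma.
    have Mc : M c.
      apply: (RcapN hM1) => //.
      nby hM1 (y * z - y * a - z * b - (y * z - (y * a + z * b + c))).
    have Myz : M ((y - b) * z) by mby ((y * z - (y * a + z * b + c)) + y * a + c).
    exists b; split=> //; apply: NNPP => nM1yb.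
    have [w [Rw Hw]] := unit1 _ (R1add Ry (R1opp (RR1 Rb))) nM1yb.
    by apply: nMz; mby (w * ((y - b) * z) - (w * (y - b) - 1) * z).
  have [s [Rs Hs]] := unitM Ra Ma.
  exists (- (s * c)); split; first rsolve.
  by nby hM1 (s * (y * z) - s * (z * b) - s * (y * z - (y * a + z * b + c)) - (s * a - 1) * y).
split.
  move=> y; split.
    by move=> Ry; have [b [Rb Hb]] := key y Ry; exists b, (y - b); split=> //; ring.
  move=> [r [m [Rr M1m ->]]]; have Rm := N_R1 hM1 M1m; r1solve.
exists (fun _ => 1); split.
- by move=> _; exact: R1_1.
- move=> y Ry; have [b [Rb Hb]] := key y Ry.
  by exists (fun _ => b); split=> //; rewrite big_ord1 mulr1.
- move=> a Ra; rewrite big_ord1 mulr1 => H i; rewrite (ord1 i).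
  exact: (RcapN hM1).
Qed.

Lemma seteq_eq (A B : Q -> Prop) : set_eq A B -> A = B.
Proof.
move=> H; apply: functional_extensionality => x.
by apply: propositional_extensionality; apply: H.
Qed.

Lemma part1 : local R1 -> set_eq (Jac R1) M -> (exists e, R1 e /\ ~ R e) ->
  [/\ set_eq R1 (E (Jac R1)), maximal_ideal R1 M & residue_dim R M R1 M 2].
Proof.
move=> [N [hN Hloc]] HJ [e [Re nRe]].
have JN : set_eq (Jac R1) N.
  move=> x; split; first by move=> [_ H]; apply: H.
  move=> Nx; split; first exact: N_R1 hN Nx.
  by move=> N' hN'; case: (Hloc N' hN' x) => _; apply.
have eNM : N = M.
  by apply: seteq_eq => x; rewrite -(seteq_eq JN); apply: HJ.
subst N; rewrite (seteq_eq HJ); split=> //.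
have unit1 g : R1 g -> ~ M g -> exists w, R1 w /\ M (w * g - 1).
  move=> Rg nMg; apply: NNPP => nu.
  have [N [hN' Ng]] := nonunit_R1 Rg nu.
  by apply: nMg; case: (Hloc N hN' g) => H _; apply: H.
have inv g : R1 g -> ~ R g -> exists p s, [/\ R p, R s & M (g * (s * (g - p)) - 1)].
  move=> Rg nRg; have [p [q [Rp Rq Hg]]] := sq Rg.
  have nMq : ~ M q.
    move=> Mq; have nMg : ~ M g by move=> /MR.
    have [w [Rw Hw]] := unit1 g Rg nMg.
    have Mgp : M (g - p).
      by mby (w * (g * g - (p * g + q)) + w * q - (w * g - 1) * (g - p)).
    apply: nRg; have -> : g = (g - p) + p by ring.
    rsolve.
  have [s [Rs Hs]] := unitM Rq nMq.
  by exists p, s; split=> //; mby (s * (g * g - (p * g + q)) + (s * q - 1)).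
exists (fun i : 'I_2 => if val i == 0%N then 1 else e); split.
- by case=> [[|i] Hi] /=; [exact: R1_1|].
- move=> y Ry; have [a [b [c [Ra Rb Rc Hye]]]] := quad Ry Re.
  have Rg : R1 (e - a) by r1solve.
  have nRg : ~ R (e - a).
    by move=> H; apply: nRe; rewrite (_ : e = (e - a) + a); [rsolve | ring].
  have [p [s [Rp Rs Hg]]] := inv _ Rg nRg.
  exists (fun i : 'I_2 => if val i == 0%N then b - (a * b + c) * s * (a + p) else (a * b + c) * s).
  split; first by case=> [[|i] Hi] /=; rsolve.
  rewrite big_ord_recl big_ord1 /=.
  by mby (- (y - b) * ((e - a) * (s * ((e - a) - p)) - 1)
          + (y * e - (y * a + e * b + c)) * (s * ((e - a) - p))).
- move=> a Ra; rewrite big_ord_recl big_ord1 /= => H.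
  have Ra0 := Ra ord0; have Ra1 := Ra (lift ord0 ord0).
  have Ma1 : M (a (lift ord0 ord0)).
    apply: NNPP => nM; have [s [Rs Hs]] := unitM Ra1 nM.
    have Me : M (e + s * a ord0).
      by mby (s * (a ord0 * 1 + a (lift ord0 ord0) * e) - (s * a (lift ord0 ord0) - 1) * e).
    apply: nRe; have -> : e = (e + s * a ord0) - s * a ord0 by ring.
    rsolve.
  have Ma0 : M (a ord0) by mby ((a ord0 * 1 + a (lift ord0 ord0) * e) - a (lift ord0 ord0) * e).
  case=> [[|[|i]] Hi].
  + by rewrite (_ : Ordinal Hi = ord0) //; apply: val_inj.
  + by rewrite (_ : Ordinal Hi = lift ord0 ord0) //; apply: val_inj.
  + by [].
Qed.

Lemma eps_from Na Nb x : maximal_ideal R1 Na -> maximal_ideal R1 Nb -> Na x -> ~ Nb x ->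
  exists f, [/\ R1 f, M (f * f - f), ~ M f & ~ M (1 - f)].
Proof.
move=> hNa hNb Nax nNbx; have Rx := N_R1 hNa Nax.
have [p [q [Rp Rq Hx]]] := sq Rx.
have Mq : M q.
  by apply: (RcapN hNa) => //; nby hNa (x * (x - p) - (x * x - (p * x + q))).
have Nbxp : Nb (x - p).
  apply: (max_prime hR1 hNb (a := x)) => //; first by r1solve.
  nby hNb ((x * x - (p * x + q)) + q).
have nMp : ~ M p.
  by move=> Mp; apply: nNbx; nby hNb ((x - p) + p).
have [s [Rs Hs]] := unitM Rp nMp.
exists (s * x); split.
- r1solve.
- by mby (s * s * (x * x - (p * x + q)) + s * s * q + s * x * (s * p - 1)).
- move=> Msx; apply: nNbx; apply: (NM hNb).
  by mby (p * (s * x) - (s * p - 1) * x).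
- move=> H; case: (hNa) => [[_ nN1] _]; apply: nN1.
  by nby hNa ((1 - s * x) + s * x).
Qed.

Lemma ex_eps : ~ local R1 ->
  exists f, [/\ R1 f, M (f * f - f), ~ M f & ~ M (1 - f)].
Proof.
move=> nloc; have [N0 hN0] := ex_max.
have [N1 [hN1 neq]] : exists N1, maximal_ideal R1 N1 /\ ~ set_eq N1 N0.
  apply: NNPP => nex; apply: nloc; exists N0; split=> // N hN.
  by apply: NNPP => ne; apply: nex; exists N; split.
have [x nx] : exists x, ~ (N1 x <-> N0 x).
  by apply: NNPP => nex; apply: neq => x; apply: NNPP => h; apply: nex; exists x.
case: (classic (N1 x)) => N1x.
  apply: (eps_from hN1 hN0 N1x) => N0x; apply: nx; by split.
have N0x : N0 x by apply: NNPP => h; apply: nx; split.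
exact: (eps_from hN0 hN1 N0x).
Qed.

Lemma jac_mul f y : R1 f -> M (f * f - f) -> ~ M (1 - f) -> Jac R1 y -> M (f * y).
Proof.
move=> Rf Hf nM1f [Ry Jy].
have Jn : Jac R1 (f * y).
  by split; [r1solve| move=> N hN; apply: (Nmr hN) => //; apply: Jy].
have Mnn := jac_sq Jn.
have Rx : R1 (f * y + (1 - f)) by r1solve.
have [P [C [RP RC Hx]]] := sq Rx.
have F1 : M (f * (f * y) - f * y) by mby ((f * f - f) * y).
have F2 : M (f * (1 - f)) by mby (- (f * f - f)).
have F3 : M ((f * y) * (1 - f)) by mby (y * (f * (1 - f))).
have F4 : M ((f * y + (1 - f)) * (f * y + (1 - f)) - (1 - f)).
  by mby ((f * y) * (f * y) + (1 + 1) * ((f * y) * (1 - f)) - f * (1 - f)).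
have F5 : M (f * (f * y + (1 - f)) - f * y) by mby ((f * (f * y) - f * y) + f * (1 - f)).
have F6 : M ((1 - f) * (f * y + (1 - f)) - (1 - f)) by mby ((f * y) * (1 - f) - f * (1 - f)).
have A : M (P * (f * y) + C * f).
  by mby (- f * ((f * y + (1 - f)) * (f * y + (1 - f)) - (P * (f * y + (1 - f)) + C))
     + f * ((f * y + (1 - f)) * (f * y + (1 - f)) - (1 - f)) + f * (1 - f)
     - P * (f * (f * y + (1 - f)) - f * y)).
have B : M ((1 - P - C) * (1 - f)).
  by mby ((1 - f) * ((f * y + (1 - f)) * (f * y + (1 - f)) - (P * (f * y + (1 - f)) + C))
     - (1 - f) * ((f * y + (1 - f)) * (f * y + (1 - f)) - (1 - f)) + f * (1 - f)
     + P * ((1 - f) * (f * y + (1 - f)) - (1 - f))).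
have MK : M (1 - P - C) by apply: (Mcancel _ _ B) => //; [rsolve|r1solve].
have Cn : M ((f * y) * C).
  by mby ((f * y) * (P * (f * y) + C * f) - P * ((f * y) * (f * y)) - C * (f * (f * y) - f * y)).
case: (classic (M C)) => MC.
  by mby ((1 - P - C) * (f * y) + (P * (f * y) + C * f) - C * f + C * (f * y)).
by apply: (Mcancel2 RC) => //; r1solve.
Qed.

Section WithEps.
Variable eps : Q.
Hypotheses (Re : R1 eps) (He : M (eps * eps - eps)) (nMe : ~ M eps) (nM1e : ~ M (1 - eps)).

Lemma jac_eqM : set_eq (Jac R1) M.
Proof.
move=> y; split; last exact: jacM.
move=> Jy.
have H1 := jac_mul Re He nM1e Jy.
have H2 : M ((1 - eps) * y).
  apply: jac_mul => //; first r1solve.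
    by mby (eps * eps - eps).
  by rewrite (_ : 1 - (1 - eps) = eps) //; ring.
by mby (eps * y + (1 - eps) * y).
Qed.

Lemma red z : R1 z -> M (z * z) -> M z.
Proof.
move=> Rz Mzz; apply/(jac_eqM z); split=> // N hN.
apply: NNPP => nNz; apply: (nNz).
exact: (max_prime hR1 hN Rz Rz (NM hN Mzz) nNz).
Qed.
End WithEps.

Definition subid f g := [/\ R1 g, M (g * g - g), M (f * g - g), ~ M g & ~ M (f - g)].

Lemma dich f y : (forall z, R1 z -> M (z * z) -> M z) ->
  R1 f -> M (f * f - f) -> ~ M (1 - f) -> R1 y ->
  (exists l, R l /\ M (f * y - l * f)) \/ (exists g, subid f g).
Proof.
move=> hred Rf Hf nM1f Ry.
have Rz : R1 (f * y) by r1solve.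
have [al [c [Ral Rc Hz]]] := sq Rz.
have H1z : M ((1 - f) * (f * y)) by mby (- (f * f - f) * y).
have Mc1 : M (c * (1 - f)).
  by mby (((1 - f) * (f * y)) * (f * y) - al * ((1 - f) * (f * y))
          - (1 - f) * ((f * y) * (f * y) - (al * (f * y) + c))).
have Mc : M c by apply: (Mcancel _ _ Mc1) => //; r1solve.
have Hz' : M ((f * y) * (f * y) - al * (f * y)) by mby (((f * y) * (f * y) - (al * (f * y) + c)) + c).
case: (classic (M al)) => Mal.
  left; exists 0; split; first exact: R_0.
  have : M (f * y) by apply: hred => //; mby (((f * y) * (f * y) - al * (f * y)) + al * (f * y)).
  by move=> H; mby (f * y).
have [s [Rs Hs]] := unitM Ral Mal.
have Mg : M ((s * (f * y)) * (s * (f * y)) - s * (f * y)).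
  by mby (s * s * ((f * y) * (f * y) - al * (f * y)) + s * (f * y) * (s * al - 1)).
have Mfg : M (f * (s * (f * y)) - s * (f * y)) by mby (s * y * (f * f - f)).
case: (classic (M (s * (f * y)))) => Msz.
  left; exists 0; split; first exact: R_0.
  by mby (al * (s * (f * y)) - (s * al - 1) * (f * y)).
case: (classic (M (f - s * (f * y)))) => Mfsz.
  left; exists al; split=> //.
  by mby (- al * (f - s * (f * y)) - (s * al - 1) * (f * y)).
by right; exists (s * (f * y)); split=> //; r1solve.
Qed.

Lemma four e1 e2 e3 e4 : R1 e1 -> R1 e2 -> R1 e3 -> R1 e4 ->
  M (e1 * e1 - e1) -> M (e2 * e2 - e2) -> M (e3 * e3 - e3) ->
  M (e1 * e2) -> M (e1 * e3) -> M (e1 * e4) -> M (e2 * e3) -> M (e2 * e4) ->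
  M (e3 * e4) -> ~ M e1 -> ~ M e2 -> ~ M e3 -> ~ M e4 -> False.
Proof.
move=> R1e R2e R3e R4e I1 I2 I3 O12 O13 O14 O23 O24 O34 n1 n2 n3 n4.
have [a [b [c [Ra Rb Rc H]]]] := quad (R1add R1e R2e) (R1add R2e R3e).
have Mc : M c.
  apply: (@Mcancel c e4) => //.
  by mby (- (e4 * ((e1 + e2) * (e2 + e3) - ((e1 + e2) * a + (e2 + e3) * b + c)))
     + (e1 * e4 + e2 * e4) * (e2 + e3) - a * (e1 * e4 + e2 * e4) - b * (e2 * e4 + e3 * e4)).
have Ma : M a.
  apply: (@Mcancel a e1) => //.
  by mby (- (e1 * ((e1 + e2) * (e2 + e3) - ((e1 + e2) * a + (e2 + e3) * b + c)))
     + (e1 * e2) * (e1 + e2 + e3) + (e1 * e3) * e1 - a * ((e1 * e1 - e1) + e1 * e2)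
     - b * (e1 * e2 + e1 * e3) - c * e1).
have Mb : M b.
  apply: (@Mcancel b e3) => //.
  by mby (- (e3 * ((e1 + e2) * (e2 + e3) - ((e1 + e2) * a + (e2 + e3) * b + c)))
     + (e1 * e3 + e2 * e3) * (e2 + e3) - a * (e1 * e3 + e2 * e3)
     - b * (e2 * e3 + (e3 * e3 - e3)) - c * e3).
apply: n2.
by mby (e2 * ((e1 + e2) * (e2 + e3) - ((e1 + e2) * a + (e2 + e3) * b + c))
   + a * (e2 * (e1 + e2)) + b * (e2 * (e2 + e3)) + c * e2
   - ((e1 * e2) * (e2 + e3) + (e2 * e3) * e2 + (e2 * e2 - e2) * (e2 + 1))).
Qed.

Lemma prim f u v : (forall z, R1 z -> M (z * z) -> M z) ->
  R1 f -> R1 u -> R1 v -> M (f * f - f) -> M (u * u - u) -> M (v * v - v) ->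
  M (f * u) -> M (f * v) -> M (u * v) -> ~ M u -> ~ M v ->
  forall y, R1 y -> exists l, R l /\ M (f * y - l * f).
Proof.
move=> hred Rf Ru Rv If Iu Iv Ofu Ofv Ouv nu nv y Ry.
have nM1f : ~ M (1 - f) by move=> H; apply: nu; mby (u * (1 - f) + f * u).
case: (dich hred Rf If nM1f Ry) => // -[g [Rg Ig Ifg ng nfg]].
exfalso.
have Ogu : M (g * u) by mby (- (f * g - g) * u + g * (f * u)).
have Ogv : M (g * v) by mby (- (f * g - g) * v + g * (f * v)).
apply: (@four g (f - g) u v) => //; try r1solve.
- by mby ((f * f - f) - (1 + 1) * (f * g - g) + (g * g - g)).
- by mby ((f * g - g) - (g * g - g)).
- by mby (f * u - g * u).
- by mby (f * v - g * v).
Qed.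

Lemma GS n (e : 'I_n -> Q) : (forall i, R1 (e i)) ->
  (forall i j, M (e i * e j - (if i == j then e i else 0))) ->
  M (\sum_i e i - 1) -> (forall i, ~ M (e i)) ->
  (forall i y, R1 y -> exists l, R l /\ M (e i * y - l * e i)) ->
  residue_split R M R1 M n.
Proof.
move=> Re Orth Hsum nMe Hl; exists e; split=> //; split=> //.
- move=> y Ry.
  have [lam Hlam] := fin_all_exists (fun i => Hl i y Ry).
  exists lam; split; first by move=> i; case: (Hlam i).
  have -> : y - \sum_i lam i * e i =
      - ((\sum_i e i - 1) * y) + \sum_i (e i * y - lam i * e i).
    rewrite sumrB -mulr_suml; ring.
  apply: Madd; first by apply: Mopp; apply: Mml.
  by apply: (big_ind M); [exact: M0|exact: Madd|move=> i _; case: (Hlam i)].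
- move=> a Ra Hs i.
  have Ra' j : R1 (a j) by apply: RR1.
  apply: (@Mcancel (a i) (e i)) => //.
  have -> : a i * e i = e i * (\sum_j a j * e j)
      - \sum_j a j * (e j * e i - (if j == i then e j else 0)).
    transitivity (\sum_j a j * (if j == i then e j else 0)).
      rewrite (bigD1 i) //= eqxx big1 ?addr0 // => j /negbTE ->.
      by rewrite mulr0.
    rewrite mulr_sumr -sumrB; apply: eq_bigr => j _; ring.
  apply: Madd; first by apply: Mmr; [apply: Re|].
  apply: Mopp; apply: (big_ind M); [exact: M0|exact: Madd|move=> j _].
  by apply: Mmr; [apply: Ra'|apply: Orth].
Qed.

Lemma split3 e1 e2 e3 : (forall z, R1 z -> M (z * z) -> M z) ->
  R1 e1 -> R1 e2 -> R1 e3 ->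
  M (e1 * e1 - e1) -> M (e2 * e2 - e2) -> M (e3 * e3 - e3) ->
  M (e1 * e2) -> M (e1 * e3) -> M (e2 * e3) ->
  ~ M e1 -> ~ M e2 -> ~ M e3 -> e1 + e2 + e3 = 1 ->
  residue_split R M R1 M 3 /\ residue_F2 R M.
Proof.
move=> hred R1e R2e R3e I1 I2 I3 O12 O13 O23 n1 n2 n3 Hsum.
have O21 : M (e2 * e1) by rewrite mulrC.
have O31 : M (e3 * e1) by rewrite mulrC.
have O32 : M (e3 * e2) by rewrite mulrC.
split.
  apply: (@GS 3 (fun i => nth 0 [:: e1; e2; e3] i)).
  - by case=> [[|[|[|i]]] Hi].
  - by case=> [[|[|[|i]]] Hi] [[|[|[|j]]] Hj] //=; rewrite subr0.
  - rewrite !big_ord_recl big_ord0 /= addr0 addrA Hsum subrr; exact: M0.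
  - by case=> [[|[|[|i]]] Hi].
  - case=> [[|[|[|i]]] Hi] //= y Ry.
    + exact: (prim hred R1e R2e R3e I1 I2 I3 O12 O13 O23 n2 n3).
    + exact: (prim hred R2e R1e R3e I2 I1 I3 O21 O23 O13 n1 n3).
    + exact: (prim hred R3e R1e R2e I3 I1 I2 O31 O32 O12 n1 n2).
move=> r Rr; apply: NNPP => nn.
have nMr : ~ M r by move=> H; apply: nn; left.
have nMr1 : ~ M (r - 1) by move=> H; apply: nn; right.
apply: nMr1.
have Rz : R1 (e1 + r * e2) by r1solve.
have [al [be [Ral Rbe H]]] := sq Rz.
have Mbe : M be.
  apply: (@Mcancel be e3) => //.
  by mby (- (e3 * ((e1 + r * e2) * (e1 + r * e2) - (al * (e1 + r * e2) + be)))
     + (e1 * e3 + r * (e2 * e3)) * (e1 + r * e2) - al * (e1 * e3 + r * (e2 * e3))).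
have M1ab : M (1 - al - be).
  apply: (@Mcancel (1 - al - be) e1) => //; first rsolve.
  by mby (e1 * ((e1 + r * e2) * (e1 + r * e2) - (al * (e1 + r * e2) + be))
     - (((e1 * e1 - e1) + r * (e1 * e2)) * (e1 + r * e2) + (e1 * e1 - e1) + r * (e1 * e2))
     + al * ((e1 * e1 - e1) + r * (e1 * e2))).
have Mr2 : M (r * r - al * r - be).
  apply: (@Mcancel (r * r - al * r - be) e2) => //; first rsolve.
  by mby (e2 * ((e1 + r * e2) * (e1 + r * e2) - (al * (e1 + r * e2) + be))
     - r * (e1 * e2 + r * (e2 * e2 - e2)) - (e1 * e2 + r * (e2 * e2 - e2)) * (e1 + r * e2)
     + al * (e1 * e2 + r * (e2 * e2 - e2))).
apply: (@Mcancel' (r - 1) r) => //; [rsolve|r1solve|].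
by mby ((r * r - al * r - be) - r * (1 - al - be) + be * (1 - r)).
Qed.

Lemma from_sub f g : (forall z, R1 z -> M (z * z) -> M z) ->
  R1 f -> M (f * f - f) -> ~ M (1 - f) -> subid f g ->
  residue_split R M R1 M 3 /\ residue_F2 R M.
Proof.
move=> hred Rf If nM1f [Rg Ig Ifg ng nfg].
apply: (@split3 g (f - g) (1 - f)) => //; try r1solve.
- by mby ((f * f - f) - (1 + 1) * (f * g - g) + (g * g - g)).
- by mby (f * f - f).
- by mby ((f * g - g) - (g * g - g)).
- by mby (- (f * g - g)).
- by mby (- (f * f - f) + (f * g - g)).
- ring.
Qed.

Lemma part3 : ~ local R1 ->
  [/\ set_eq (Jac R1) M, set_eq R1 (E (Jac R1)) &
      (residue_split R M R1 M 2 \/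
       (residue_split R M R1 M 3 /\ residue_F2 R M))].
Proof.
move=> nloc; have [eps [Re He nMe nM1e]] := ex_eps nloc.
have JM := jac_eqM Re He nMe nM1e.
have hred := red Re He nMe nM1e.
split=> //; first by rewrite (seteq_eq JM).
have I1e : M ((1 - eps) * (1 - eps) - (1 - eps)) by mby (eps * eps - eps).
have nM11e : ~ M (1 - (1 - eps)) by rewrite (_ : 1 - (1 - eps) = eps) //; ring.
case: (classic (exists g, subid eps g)) => [[g Hg]|nex1].
  by right; apply: (from_sub hred Re He nM1e Hg).
case: (classic (exists g, subid (1 - eps) g)) => [[g Hg]|nex2].
  by right; apply: (@from_sub (1 - eps) g hred) => //; r1solve.
left; apply: (@GS 2 (fun i => nth 0 [:: eps; 1 - eps] i)).
- by case=> [[|[|i]] Hi] //=; r1solve.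
- case=> [[|[|i]] Hi] [[|[|j]] Hj] //=; rewrite ?subr0.
  + by mby (- (eps * eps - eps)).
  + by mby (- (eps * eps - eps)).
- rewrite !big_ord_recl big_ord0 /= addr0 (_ : eps + (1 - eps) - 1 = 0); [exact: M0|ring].
- by case=> [[|[|i]] Hi].
- case=> [[|[|i]] Hi] //= y Ry.
  + case: (dich hred Re He nM1e Ry) => // H; exfalso; exact: nex1.
  + have R1e' : R1 (1 - eps) by r1solve.
    case: (dich hred R1e' I1e nM11e Ry) => // H; exfalso; exact: nex2.
Qed.

End Main.

Theorem lemma3p7 (Q : comUnitRingType) (R M : Q -> Prop) :
  total_quotient_ring R ->
  local_with R M ->
  regular R M ->
  quadratic R (E M) ->
  ~ set_eq R (E M) ->
  let R1 := E M in
  let R2 := E (Jac R1) in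
  [/\
   (* (1) *)
   (local R1 -> set_eq (Jac R1) M ->
      [/\ set_eq R1 R2, maximal_ideal R1 M & residue_dim R M R1 M 2]),
   (* (2) *)
   (forall M1, local_with R1 M1 -> ~ set_eq M1 M ->
      set_eq R1 (fun y => exists r m, [/\ R r, M1 m & y = r + m]) /\
      residue_dim R M R1 M1 1),
   (* (3) *)
   (~ local R1 ->
      [/\ set_eq (Jac R1) M, set_eq R1 R2 &
          (residue_split R M R1 M 2 \/
           (residue_split R M R1 M 3 /\ residue_F2 R M))])
   & (* (4) *)
   (forall x y, Jac R1 x -> Jac R1 y -> M (x * y))].
Proof.
move=> [HR _ _] HM _ Hq Hne R1 R2.
have ex_e : exists e, E M e /\ ~ R e.
  apply: NNPP => nex; apply: Hne => x; split; first exact: Hq.1.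
  by move=> Hx; apply: NNPP => nRx; apply: nex; exists x.
split.
- by move=> Hloc HJ; apply: (part1 HR HM Hq Hloc HJ ex_e).
- by move=> M1 hL neq; apply: (part2 HR HM Hq hL neq).
- by move=> nloc; apply: (part3 HR HM Hq nloc).
- by move=> x y Jx Jy; apply: (jac_prod HR HM Hq Jx Jy).
Qed.
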